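(* Let $(\|\cdot\|,\mathcal{P})$ be a sparsity structure on $\mathcal{E}$, let $B:\mathcal{X}\to\mathcal{E}$ be linear, and let $A:\mathcal{X}\to\mathbb{R}^n$ be linear. For $P\in\mathcal{P}$ define $$\mathcal{C}_P=\bigcup_{x\in\mathcal{X}:\ PBx=Bx}\mathcal{T}(x),\qquad \mathcal{D}_P=\{z\in\mathcal{X}:\ \|\bar P Bz\|\le\|PBz\|\}.$$ Then $\mathcal{C}_P\subseteq\mathcal{D}_P$ for every $P\in\mathcal{P}$. Consequently, for every $k\ge 0$, $\mu_k(A)\ge\sigma_k(A)$, where $$\mu_k(A)=\inf_{\substack{P\in\mathcal{P}_k,\ x\in\mathcal{X}\\ PBx=Bx}}\ \inf_{z\in\mathcal{T}(x),\,z\ne 0}\frac{\|Az\|_2}{\|z\|_2},\qquad \sigma_k(A)=\inf_{\substack{P\in\mathcal{P}_k,\ z\in\mathcal{X},\ z\neq 0\\ \|\bar PBz\|\le\|PBz\|}}\frac{\|Az\|_2}{\|z\|_2}.$$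
   Context: Sparsity structure: let $\mathcal{X},\mathcal{E}$ be finite-dimensional Euclidean spaces and $B:\mathcal{X}\to\mathcal{E}$ a linear map. A sparsity structure on $\mathcal{E}$ is a norm $\|\cdot\|$ on $\mathcal{E}$, with dual norm $\|\cdot\|_*$, together with a family $\mathcal{P}$ of linear maps $\mathcal{E}\to\mathcal{E}$ such that: (i) every $P\in\mathcal{P}$ is a projector, $P^2=P$; (ii) every $P\in\mathcal{P}$ is assigned a weight $\nu(P)\ge 0$ and a linear map $\bar P:\mathcal{E}\to\mathcal{E}$ with $P\bar P=0$; (iii) for every $P\in\mathcal{P}$ and all $f,g\in\mathcal{E}$, $\|P^*f+\bar P^*g\|_*\le\max(\|f\|_*,\|g\|_* )$, where $P^*$ and $\bar P^*$ denote adjoints. For $k\ge 0$, $\mathcal{P}_k=\{P\in\mathcal{P}:\nu(P)\le k\}$. Tangent cone: for $x\in\mathcal{X}$, $\mathcal{T}(x)=\{\lambda z:\ \lambda\ge 0,\ z\in\mathcal{X},\ \|Bx+Bz\|\le\|Bx\|\}$. $\|\cdot\|_2$ is the Euclidean norm. *)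

(* Defs.v *)
From Stdlib Require Import Reals.
From mathcomp Require Import all_boot.
Set Implicit Arguments.
Unset Strict Implicit.
Unset Printing Implicit Defensive.
Open Scope R_scope.

(* A finite-dimensional Euclidean space of dimension n is modelled as R^n,
   i.e. functions 'I_n -> R, with the standard inner product; linear maps are
   matrices, adjoints are transposes. *)
Definition vec (n : nat) := 'I_n -> R.
Definition mat (m n : nat) := 'I_m -> 'I_n -> R.

Definition vzero {n} : vec n := fun _ => 0.
Definition vadd {n} (u v : vec n) : vec n := fun i => u i + v i.
Definition vscale {n} (c : R) (v : vec n) : vec n := fun i => c * v i.
Definition dot {n} (u v : vec n) : R := \big[Rplus/0]_(i < n) (u i * v i).
Definition norm2 {n} (v : vec n) : R := sqrt (dot v v).

Definition mv {m n} (M : mat m n) (v : vec n) : vec m :=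
  fun i => \big[Rplus/0]_(j < n) (M i j * v j).
Definition mm {m n p} (M : mat m n) (N : mat n p) : mat m p :=
  fun i k => \big[Rplus/0]_(j < n) (M i j * N j k).
Definition tr {m n} (M : mat m n) : mat n m := fun i j => M j i.
Definition mzero {m n} : mat m n := fun _ _ => 0.

Definition is_norm {n} (N : vec n -> R) : Prop :=
  (forall v, N v = 0 -> v = vzero) /\
  (forall c v, N (vscale c v) = Rabs c * N v) /\
  (forall u v, N (vadd u v) <= N u + N v).

Definition is_dual_norm {n} (N : vec n -> R) (D : vec n -> R) : Prop :=
  forall f, is_lub (fun r => exists u, N u <= 1 /\ r = dot f u) (D f).

Definition sparsity_structure {e} (N D : vec e -> R) (Pfam : mat e e -> Prop)
  (nu : mat e e -> R) (Pbar : mat e e -> mat e e) : Prop :=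
  is_norm N /\ is_dual_norm N D /\
  forall P, Pfam P ->
    mm P P = P /\ 0 <= nu P /\ mm P (Pbar P) = mzero /\
    (forall f g, D (vadd (mv (tr P) f) (mv (tr (Pbar P)) g)) <= Rmax (D f) (D g)).

Definition tcone {m e} (N : vec e -> R) (B : mat e m) (x z : vec m) : Prop :=
  exists (lam : R) (z' : vec m),
    0 <= lam /\ N (mv B (vadd x z')) <= N (mv B x) /\ z = vscale lam z'.

Definition C_set {m e} (N : vec e -> R) (B : mat e m) (P : mat e e) (z : vec m) :=
  exists x : vec m, mv P (mv B x) = mv B x /\ tcone N B x z.

Definition D_set {m e} (N : vec e -> R) (B : mat e m) (Pb P : mat e e) (z : vec m) :=
  N (mv Pb (mv B z)) <= N (mv P (mv B z)).

(* The set of ratios whose infimum is mu_k(A). *)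
Definition mu_set {n m e} (N : vec e -> R) (Pfam : mat e e -> Prop)
  (nu : mat e e -> R) (B : mat e m) (A : mat n m) (k : R) (r : R) : Prop :=
  exists P x z, Pfam P /\ nu P <= k /\ mv P (mv B x) = mv B x /\
    tcone N B x z /\ z <> vzero /\ r = norm2 (mv A z) / norm2 z.

(* The set of ratios whose infimum is sigma_k(A). *)
Definition sigma_set {n m e} (N : vec e -> R) (Pfam : mat e e -> Prop)
  (nu : mat e e -> R) (Pbar : mat e e -> mat e e) (B : mat e m) (A : mat n m)
  (k : R) (r : R) : Prop :=
  exists P z, Pfam P /\ nu P <= k /\ z <> vzero /\
    D_set N B (Pbar P) P z /\ r = norm2 (mv A z) / norm2 z.

Definition lower_bound (S : R -> Prop) (c : R) : Prop := forall r, S r -> c <= r.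

(* inf S >= inf T (infima in the extended reals, inf of the empty set = +oo):
   every lower bound of T is a lower bound of S. *)
Definition inf_ge (S T : R -> Prop) : Prop :=
  forall c, lower_bound T c -> lower_bound S c.

(* Main.v *)
Require Import Defs.
From HB Require Import structures.
From Stdlib Require Import Reals Lra FunctionalExtensionality.
From mathcomp Require Import all_boot.
Open Scope R_scope.
Set Implicit Arguments.
Ltac vext := apply functional_extensionality; intro; unfold vadd, vscale, vzero; try ring.

Lemma Rmult_0_l' (x : R) : 0 * x = 0. Proof. ring. Qed.
Lemma Rmult_0_r' (x : R) : x * 0 = 0. Proof. ring. Qed.
Lemma Rplus_0_l' (x : R) : 0 + x = x. Proof. ring. Qed.
Lemma RplusA : associative Rplus. Proof. move=>*; ring. Qed.
Lemma RmultA : associative Rmult. Proof. move=>*; ring. Qed.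
HB.instance Definition _ := Monoid.isComLaw.Build R 0 Rplus RplusA Rplus_comm Rplus_0_l'.
HB.instance Definition _ := Monoid.isComLaw.Build R 1 Rmult RmultA Rmult_comm Rmult_1_l.
HB.instance Definition _ := Monoid.isMulLaw.Build R 0 Rmult Rmult_0_l' Rmult_0_r'.
HB.instance Definition _ := Monoid.isAddLaw.Build R Rmult Rplus Rmult_plus_distr_r Rmult_plus_distr_l.


Lemma mv_add m n (M : mat m n) a b : mv M (vadd a b) = vadd (mv M a) (mv M b).
Proof. vext. unfold mv. rewrite -big_split /=. apply: eq_bigr => i _. ring. Qed.

Lemma mv_scale m n (M : mat m n) c a : mv M (vscale c a) = vscale c (mv M a).
Proof. vext. unfold mv. rewrite big_distrr /=. apply: eq_bigr => i _. ring. Qed.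

Lemma dot_add n (c a b : vec n) : dot c (vadd a b) = dot c a + dot c b.
Proof. unfold dot. rewrite -big_split /=. apply: eq_bigr => i _. unfold vadd. ring. Qed.

Lemma dot_scale n (c a : vec n) s : dot c (vscale s a) = s * dot c a.
Proof. unfold dot. rewrite big_distrr /=. apply: eq_bigr => i _. unfold vscale. ring. Qed.

Lemma dot_tr m n (M : mat m n) f v : dot (mv (tr M) f) v = dot f (mv M v).
Proof.
unfold dot, mv, tr.
under eq_bigr => i _ do rewrite big_distrl /=.
under [RHS]eq_bigr => i _ do rewrite big_distrr /=.
rewrite exchange_big /=. apply: eq_bigr => i _; apply: eq_bigr => j _. ring.
Qed.

Definition basis {n} (i0 : 'I_n) : vec n := fun j => if j == i0 then 1 else 0.
Lemma dot_basis n (c : vec n) i0 : dot c (basis i0) = c i0.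
Proof.
unfold dot. rewrite (bigD1 i0) //= big1 /basis.
  rewrite eqxx. ring.
move=> i /negbTE ->. ring.
Qed.

Definition subl {e} (q : vec e -> R) :=
  (forall u v, q (vadd u v) <= q u + q v) /\ (forall c v, 0 <= c -> q (vscale c v) = c * q v).
Definition lin_along {e} (q : vec e -> R) d c :=
  forall v s, q (vadd v (vscale s d)) = q v + s * c.

Lemma subl_0 e (q : vec e -> R) : subl q -> q vzero = 0.
Proof.
move=> [_ H]. have -> : (vzero : vec e) = vscale 0 vzero by vext.
rewrite H; [ring | lra].
Qed.

Lemma subl_lb e (q : vec e -> R) d t : subl q -> t * q d <= q (vscale t d).
Proof.
move=> Hq. have Hq' := Hq. case: Hq' => [Ha Hh].
destruct (Rle_dec 0 t) as [Ht|Ht].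
- rewrite Hh //; lra.
- have -> : vscale t d = vscale (-t) (vscale (-1) d) by vext.
  rewrite Hh; last lra.
  have H0 := subl_0 Hq.
  have : q (vadd d (vscale (-1) d)) <= q d + q (vscale (-1) d) by apply Ha.
  have -> : vadd d (vscale (-1) d) = vzero by vext.
  rewrite H0 => H1.
  have : 0 <= - t by lra. move=> Ht'.
  have := Rmult_le_compat_l (-t) (- q d) (q (vscale (-1) d)) Ht' ltac:(lra). lra.
Qed.

Lemma step e (q : vec e -> R) d : subl q -> exists q' : vec e -> R,
  subl q' /\ (forall v, q' v <= q v) /\ lin_along q' d (q d) /\
  (forall d0 c0, lin_along q d0 c0 -> lin_along q' d0 c0).
Proof.
move=> Hq. have Hq' := Hq. case: Hq' => [Hadd Hhom].
set c := q d.
have Hlb : forall v t, - q (vscale (-1) v) <= q (vadd v (vscale t d)) - t * c.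
  move=> v t.
  have E : vscale t d = vadd (vadd v (vscale t d)) (vscale (-1) v) by vext.
  have := Hadd (vadd v (vscale t d)) (vscale (-1) v). rewrite -E.
  have := subl_lb d t Hq. rewrite /c. lra.
have Hc : forall v, {m | is_lub (fun r => exists t, r = - (q (vadd v (vscale t d)) - t*c)) m}.
  move=> v; apply completeness.
  - exists (q (vscale (-1) v)) => r [t ->]. have := Hlb v t. lra.
  - exists (- (q (vadd v (vscale 0 d)) - 0*c)). by exists 0.
pose q' v := - proj1_sig (Hc v).
have Ha : forall v t, q' v <= q (vadd v (vscale t d)) - t*c.
  move=> v t. rewrite /q'. case: (Hc v) => m [Hub _] /=.
  have := Hub (- (q (vadd v (vscale t d)) - t*c)) (ex_intro _ t erefl). lra.
have Hb : forall v M, (forall t, M <= q (vadd v (vscale t d)) - t*c) -> M <= q' v.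
  move=> v M HM. rewrite /q'. case: (Hc v) => m [_ Hl] /=.
  have : m <= - M. apply Hl => r [t ->]. have := HM t. lra.
  lra.
clearbody q'.
exists q'. split; [split|split; [|split]].
-
  move=> u w.
  have H1 : forall t2, q' (vadd u w) - (q (vadd w (vscale t2 d)) - t2*c) <= q' u.
    move=> t2. apply Hb => t1.
    have := Ha (vadd u w) (t1 + t2).
    have -> : vadd (vadd u w) (vscale (t1 + t2) d) =
              vadd (vadd u (vscale t1 d)) (vadd w (vscale t2 d)) by vext.
    have := Hadd (vadd u (vscale t1 d)) (vadd w (vscale t2 d)). lra.
  have : q' (vadd u w) - q' u <= q' w.
    apply Hb => t2. have := H1 t2. lra.
  lra.
-
  move=> s v Hs.
  destruct (Req_dec s 0) as [->|Hs0].
  + have -> : vscale 0 v = vzero by vext.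
    rewrite Rmult_0_l. apply Rle_antisym.
    * have := Ha vzero 0.
      have -> : vadd vzero (vscale 0 d) = vzero by vext.
      rewrite (subl_0 Hq). lra.
    * apply Hb => t.
      have -> : vadd vzero (vscale t d) = vscale t d by vext.
      have := subl_lb d t Hq. rewrite /c. lra.
  + have Hsp : 0 < s by lra.
    apply Rle_antisym.
    * have H1 : / s * q' (vscale s v) <= q' v.
        apply Hb => t.
        have := Ha (vscale s v) (s * t).
        have -> : vadd (vscale s v) (vscale (s * t) d) = vscale s (vadd v (vscale t d)) by vext.
        rewrite Hhom; last lra.
        move=> H2.
        apply (Rmult_le_reg_l s); first lra.
        have -> : s * (/ s * q' (vscale s v)) = q' (vscale s v) by field; lra.
        lra.
      have := Rmult_le_compat_l s _ _ (Rlt_le _ _ Hsp) H1.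
      have -> : s * (/ s * q' (vscale s v)) = q' (vscale s v) by field; lra.
      done.
    * apply Hb => t.
      have := Ha v (t / s).
      have -> : vadd (vscale s v) (vscale t d) = vscale s (vadd v (vscale (t / s) d)).
        apply functional_extensionality => x. rewrite /vadd /vscale. field. lra.
      rewrite Hhom; last lra.
      move=> H2.
      have := Rmult_le_compat_l s _ _ (Rlt_le _ _ Hsp) H2.
      have -> : s * (q (vadd v (vscale (t / s) d)) - t / s * c) =
                s * q (vadd v (vscale (t / s) d)) - t * c by field; lra.
      done.
- move=> v. have := Ha v 0.
  have -> : vadd v (vscale 0 d) = v by vext.
  lra.
- move=> v s. apply Rle_antisym.
  + have : q' (vadd v (vscale s d)) - s * c <= q' v.
      apply Hb => u.
      have := Ha (vadd v (vscale s d)) (u - s).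
      have -> : vadd (vadd v (vscale s d)) (vscale (u - s) d) = vadd v (vscale u d) by vext.
      lra.
    rewrite /c. lra.
  + have : q' v + s * c <= q' (vadd v (vscale s d)).
      apply Hb => t.
      have := Ha v (s + t).
      have -> : vadd v (vscale (s + t) d) = vadd (vadd v (vscale s d)) (vscale t d) by vext.
      lra.
    rewrite /c. lra.
- move=> d0 c0 Hl v s.
  have E : forall t, vadd (vadd v (vscale s d0)) (vscale t d) = vadd (vadd v (vscale t d)) (vscale s d0) by move=> t; vext.
  apply Rle_antisym.
  + have : q' (vadd v (vscale s d0)) - s * c0 <= q' v.
      apply Hb => t.
      have := Ha (vadd v (vscale s d0)) t. rewrite E Hl. lra.
    lra.
  + have : q' v + s * c0 <= q' (vadd v (vscale s d0)).
      apply Hb => t.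
      have := Ha v t. rewrite E Hl. lra.
    lra.
Qed.

Lemma iter_step e (p : vec e -> R) y0 : subl p -> forall k, exists q, subl q /\
  (forall v, q v <= p v) /\ lin_along q y0 (p y0) /\
  exists c : 'I_e -> R, forall i : 'I_e, (i < k)%N -> lin_along q (basis i) (c i).
Proof.
move=> Hp; elim=> [|k [q [Hs [Hle [Hy [c Hc]]]]]].
- have [q [Hs [Hle [Hy _]]]] := step y0 Hp.
  exists q; split; [done|split; [done|split; [done|]]].
  by exists (fun _ => 0).
- case: (ltnP k e) => Hk.
  + pose i0 := Ordinal Hk.
    have [q' [Hs' [Hle' [Hy' Hpr]]]] := step (basis i0) Hs.
    exists q'; split; [done|split; [|split]].
    * move=> v; have := Hle' v; have := Hle v; lra.
    * by apply Hpr.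
    * exists (fun i => if i == i0 then q (basis i0) else c i) => i Hi.
      case E: (i == i0).
      -- by move/eqP: E => ->.
      -- apply Hpr, Hc. rewrite ltnS leq_eqVlt in Hi.
         case/orP: Hi => // /eqP Hik.
         exfalso. move/negbT: E => /eqP; apply. apply: val_inj => /=. exact Hik.
  + exists q; split; [done|split; [done|split; [done|]]].
    exists c => i Hi. apply Hc. exact: (leq_trans (ltn_ord i) Hk).
Qed.

Definition trunc {e} (k : nat) (v : vec e) : vec e := fun i => if (i < k)%N then v i else 0.

Lemma norming_sub e (p : vec e -> R) y0 : subl p ->
  exists f, (forall v, dot f v <= p v) /\ dot f y0 = p y0.
Proof.
move=> Hp. have [q [Hs [Hle [Hy [c Hc]]]]] := iter_step y0 Hp e.
have Hq : forall v, q v = dot c v.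
  move=> v.
  have T : forall k, q (trunc k v) = dot c (trunc k v).
    elim=> [|k IH].
    - have -> : trunc 0 v = vzero.
        apply functional_extensionality => i. by rewrite /trunc ltn0.
      rewrite (subl_0 Hs). rewrite /dot big1 // => i _. rewrite /vzero. ring.
    - case: (ltnP k e) => Hk.
      + pose i0 := Ordinal Hk.
        have -> : trunc k.+1 v = vadd (trunc k v) (vscale (v i0) (basis i0)).
          apply functional_extensionality => i. rewrite /trunc /vadd /vscale /basis.
          case E: (i == i0).
          * move/eqP: E => ->. rewrite /= ltnSn ltnn. ring.
          * have Hik : (nat_of_ord i == k) = false.
              apply/negbTE; move: E; apply: contraFN => /eqP H; apply/eqP; apply: val_inj; exact H.
            rewrite ltnS leq_eqVlt Hik /=. ring.
        rewrite (Hc i0) /=; last by [].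
        rewrite dot_add dot_scale dot_basis IH. ring.
      + have -> : trunc k.+1 v = trunc k v.
          apply functional_extensionality => i. rewrite /trunc.
          have H1 : (i < k)%N := leq_trans (ltn_ord i) Hk.
          by rewrite H1 ltnS (ltnW H1).
        exact IH.
  have E : trunc e v = v.
    apply functional_extensionality => i. by rewrite /trunc ltn_ord.
  by have := T e; rewrite E.
exists c; split.
- move=> v; rewrite -Hq; exact: Hle.
- rewrite -Hq.
  have -> : y0 = vadd vzero (vscale 1 y0) by vext.
  rewrite Hy (subl_0 Hs).
  have -> : vadd vzero (vscale 1 y0) = y0 by vext.
  ring.
Qed.

Lemma dot_addl n (a b v : vec n) : dot (vadd a b) v = dot a v + dot b v.
Proof. unfold dot. rewrite -big_split /=. apply: eq_bigr => i _. unfold vadd. ring. Qed.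

Lemma norm_0 e (N : vec e -> R) : is_norm N -> N vzero = 0.
Proof.
move=> [_ [Hh _]]. have -> : (vzero : vec e) = vscale 0 vzero by vext.
rewrite Hh Rabs_R0; ring.
Qed.

Lemma norm_nonneg e (N : vec e -> R) v : is_norm N -> 0 <= N v.
Proof.
move=> HN. have H0 := norm_0 HN. case: HN => [_ [Hh Ht]].
have := Ht v (vscale (-1) v).
have -> : vadd v (vscale (-1) v) = vzero by vext.
rewrite Hh Rabs_Ropp Rabs_R1 H0. lra.
Qed.

Lemma norm_subl e (N : vec e -> R) : is_norm N -> subl N.
Proof.
move=> [_ [Hh Ht]]; split => // c v Hc. by rewrite Hh Rabs_pos_eq.
Qed.

Lemma dual_bound e (N D : vec e -> R) g u : is_norm N -> is_dual_norm N D ->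
  dot g u <= D g * N u.
Proof.
move=> HN HD. have Hnn := norm_nonneg u HN.
have H0 := norm_0 HN.
have HN' := HN. case: HN' => [Hz [Hh _]].
destruct (Req_dec (N u) 0) as [E|E].
- have -> : u = vzero by apply Hz.
  rewrite H0 /dot big1; first lra. move=> i _; rewrite /vzero; ring.
- have Hp : 0 < N u by lra.
  have Hw : N (vscale (/ N u) u) <= 1.
    rewrite Hh Rabs_pos_eq; last by apply Rlt_le, Rinv_0_lt_compat.
    rewrite Rinv_l; lra.
  have := proj1 (HD g) (dot g (vscale (/ N u) u)) (ex_intro _ _ (conj Hw erefl)).
  rewrite dot_scale => H.
  have := Rmult_le_compat_l (N u) _ _ (Rlt_le _ _ Hp) H.
  have -> : N u * (/ N u * dot g u) = dot g u by field; lra.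
  lra.
Qed.

Lemma norming e (N D : vec e -> R) y : is_norm N -> is_dual_norm N D ->
  exists f, D f <= 1 /\ dot f y = N y.
Proof.
move=> HN HD. have [f [Hf Hy]] := norming_sub y (norm_subl HN).
exists f; split => //.
apply (proj2 (HD f)) => r [u [Hu ->]]. have := Hf u. lra.
Qed.

Lemma key e (N D : vec e -> R) Pfam nu Pbar P v :
  sparsity_structure N D Pfam nu Pbar -> Pfam P ->
  N (mv P v) + N (mv (Pbar P) v) <= N v.
Proof.
move=> [HN [HD HS]] HP. have [_ [_ [_ Hiii]]] := HS P HP.
have [f [Hf Ef]] := norming (mv P v) HN HD.
have [g [Hg Eg]] := norming (mv (Pbar P) v) HN HD.
set h := vadd (mv (tr P) f) (mv (tr (Pbar P)) g).
have Hh : D h <= 1.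
  have := Hiii f g. have := Rmax_lub _ _ _ Hf Hg. rewrite /h. lra.
have Edot : dot h v = N (mv P v) + N (mv (Pbar P) v).
  by rewrite /h dot_addl !dot_tr Ef Eg.
have := dual_bound h v HN HD. have := norm_nonneg v HN.
move=> H1 H2.
have : D h * N v <= 1 * N v by apply Rmult_le_compat_r.
lra.
Qed.

Lemma part1 m e (N D : vec e -> R) (Pfam : mat e e -> Prop)
  (nu : mat e e -> R) (Pbar : mat e e -> mat e e) (B : mat e m) :
  sparsity_structure N D Pfam nu Pbar ->
  (forall P, Pfam P -> forall z, C_set N B P z -> D_set N B (Pbar P) P z).
Proof.
move=> HS P HP z [x [Hx [lam [z' [Hl [Hn ->]]]]]].
have HN : is_norm N by case: HS.
set u := mv B x in Hx Hn *. set w := mv B z'.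
rewrite mv_add -/u -/w in Hn.
have K1 := @key _ _ _ _ _ _ P u HS HP. rewrite Hx in K1.
have Hu0 : N (mv (Pbar P) u) = 0.
  have := norm_nonneg (mv (Pbar P) u) HN. lra.
have Hpu : mv (Pbar P) u = vzero by case: HN => Hz _; apply Hz.
have K2 := @key _ _ _ _ _ _ P (vadd u w) HS HP.
rewrite !mv_add Hx Hpu in K2.
have E0 : vadd vzero (mv (Pbar P) w) = mv (Pbar P) w by vext.
rewrite E0 in K2.
have Tr : N u <= N (vadd u (mv P w)) + N (mv P w).
  have := proj2 (proj2 HN) (vadd u (mv P w)) (vscale (-1) (mv P w)).
  have -> : vadd (vadd u (mv P w)) (vscale (-1) (mv P w)) = u by vext.
  rewrite (proj1 (proj2 HN)) Rabs_Ropp Rabs_R1. lra.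
have Hw : N (mv (Pbar P) w) <= N (mv P w) by lra.
rewrite /D_set !mv_scale !(proj1 (proj2 HN)).
apply Rmult_le_compat_l => //. exact: Rabs_pos.
Qed.

Theorem lemma6 (n m e : nat) (N D : vec e -> R) (Pfam : mat e e -> Prop)
  (nu : mat e e -> R) (Pbar : mat e e -> mat e e) (B : mat e m) (A : mat n m) :
  sparsity_structure N D Pfam nu Pbar ->
  (forall P, Pfam P -> forall z, C_set N B P z -> D_set N B (Pbar P) P z) /\
  (forall k : R, 0 <= k ->
     inf_ge (mu_set N Pfam nu B A k) (sigma_set N Pfam nu Pbar B A k)).
Proof.
move=> HS. have H1 := part1 (B:=B) HS. split; first exact H1.
move=> k _ c Hlb r [P [x [z [HP [Hnu [Hx [Ht [Hz Hr]]]]]]]].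
apply Hlb. exists P, z.
refine (conj HP (conj Hnu (conj Hz (conj _ Hr)))).
apply (H1 P HP). by exists x.
Qed.
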